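(* Let $A$ be a partially ordered set and $G,H,K$ games over $A$. Then: (a) if $G\lhd H$ and $H\le K$ then $G\lhd K$; (b) if $G\le H$ and $H\lhd K$ then $G\lhd K$; (c) if $G\le H$ and $H\le K$ then $G\le K$.
   Context: Games over a poset $A$ are defined inductively: for each $a\in A$ there is an atomic game $[a]$, which has no options; and if $L$ and $R$ are non-empty sets of games, then $\{L\mid R\}$ is a composite game with left options $L$ and right options $R$. The relations $\le$ and $\lhd$ are defined by simultaneous recursion: $G\le H$ iff (1) every left option $G^L$ of $G$ satisfies $G^L\lhd H$, (2) every right option $H^R$ of $H$ satisfies $G\lhd H^R$, and (3) if $G$ or $H$ is atomic then $G\lhd H$; and $G\lhd H$ iff (1) some right option $G^R$ of $G$ satisfies $G^R\le H$, or (2) some left option $H^L$ of $H$ satisfies $G\le H^L$, or (3) $G=[a]$, $H=[b]$ are atomic and $a\le b$. *)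

(* Defs.v *)
From mathcomp Require Import all_boot all_order.
Set Implicit Arguments. Unset Strict Implicit. Unset Printing Implicit Defensive.

Section Games.
Context {d : Order.disp_t} {A : porderType d}.

(* Games over a poset A.  A composite game {L | R} is given by two nonempty
   families of games L : I -> game and R : J -> game; the sets of left/right
   options are their ranges. *)
Inductive game : Type :=
| Atom : A -> game
| Comp : forall (I J : Type), inhabited I -> inhabited J ->
         (I -> game) -> (J -> game) -> game.

Definition is_atom (G : game) : Prop :=
  match G with Atom _ => True | Comp _ _ _ _ _ _ => False end.

(* gle_glf G H = (G <= H, G <| H), defined by simultaneous recursion
   (outer recursion on G, inner recursion on H). *)
Fixpoint gle_glf (G : game) : game -> Prop * Prop :=
  fix inner (H : game) : Prop * Prop :=
    let lf : Prop :=
      (match G with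
       | Atom _ => False
       | Comp _ _ _ _ _ R => exists j, fst (gle_glf (R j) H)
       end)
      \/
      (match H with
       | Atom _ => False
       | Comp _ _ _ _ L _ => exists i, fst (inner (L i))
       end)
      \/
      (match G, H with
       | Atom a, Atom b => (a <= b)%O
       | _, _ => False
       end) in
    let le : Prop :=
      (match G with
       | Atom _ => True
       | Comp _ _ _ _ L _ => forall i, snd (gle_glf (L i) H)
       end)
      /\
      (match H with
       | Atom _ => True
       | Comp _ _ _ _ _ R => forall j, snd (inner (R j))
       end)
      /\
      ((is_atom G \/ is_atom H) -> lf) in
    (le, lf).

Definition gle (G H : game) : Prop := fst (gle_glf G H).
Definition glf (G H : game) : Prop := snd (gle_glf G H).

End Games.
Arguments game {d} A.

(* Main.v *)
Require Import Defs.
From mathcomp Require Import all_boot all_order.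
Set Implicit Arguments. Unset Strict Implicit.

Section Aux.
Context {d : Order.disp_t} {A : porderType d}.

Definition lsub (X Y : game A) : Prop :=
  match Y with Atom _ => False | Comp _ _ _ _ L _ => exists i, X = L i end.
Definition rsub (X Y : game A) : Prop :=
  match Y with Atom _ => False | Comp _ _ _ _ _ R => exists j, X = R j end.

Lemma glf_inv (G H : game A) : glf G H ->
  (exists G', rsub G' G /\ gle G' H) \/ (exists H', lsub H' H /\ gle G H') \/
  (exists a b, G = Atom a /\ H = Atom b /\ (a <= b)%O).
Proof.
case: G => [a|I J hI hJ L R]; case: H => [b|I' J' hI' hJ' L' R'];
rewrite /glf /=.
- case=> [[]|[[]|h]]; right; right; by exists a, b.
- case=> [[]|[[i h]|[]]]; right; left; exists (L' i); split => //; by exists i.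
- case=> [[j h]|[[]|[]]]; left; exists (R j); split => //; by exists j.
- case=> [[j h]|[[i h]|[]]].
  + left; exists (R j); split => //; by exists j.
  + right; left; exists (L' i); split => //; by exists i.
Qed.

Lemma glf_R (G G' H : game A) : rsub G' G -> gle G' H -> glf G H.
Proof.
case: G => [a|I J hI hJ L R] //= [j ->] h; case: H h => [?|? ? ? ? ? ?] h /=; rewrite /glf /=; left; by exists j.
Qed.

Lemma glf_L (G H H' : game A) : lsub H' H -> gle G H' -> glf G H.
Proof.
case: H => [a|I J hI hJ L R] //= [i ->] h; case: G h => [?|? ? ? ? ? ?] h /=; rewrite /glf /=; right; left; by exists i.
Qed.

Lemma glf_atom (a b : A) : (a <= b)%O -> glf (Atom a) (Atom b).
Proof. by move=> h; rewrite /glf /=; right; right. Qed.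

Lemma gle_atom (a b : A) : (a <= b)%O -> gle (Atom a) (Atom b).
Proof. move=> h; rewrite /gle /=; split=> //; split=> // _; by right; right. Qed.

Lemma gle_elimL (G G' H : game A) : gle G H -> lsub G' G -> glf G' H.
Proof.
case: G => [a|I J hI hJ L R] //; case: H => [b|I' J' hI' hJ' L' R'] [h _] [i ->]; exact: h.
Qed.

Lemma gle_elimR (G H H' : game A) : gle G H -> rsub H' H -> glf G H'.
Proof.
case: H => [a|I J hI hJ L R] //; case: G => [b|I' J' hI' hJ' L' R'] [_ [h _]] [i ->]; exact: h.
Qed.

Lemma gle_atom_glf (G H : game A) : is_atom G \/ is_atom H -> gle G H -> glf G H.
Proof.
move=> hat; case: G hat => [a|I J hI hJ L R]; case: H => [b|I' J' hI' hJ' L' R'] hat [_ [_ h]]; exact: h.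
Qed.

Lemma gle_intro (G K : game A) :
  (forall G', lsub G' G -> glf G' K) -> (forall K', rsub K' K -> glf G K') ->
  (is_atom G \/ is_atom K -> glf G K) -> gle G K.
Proof.
case: G => [a|I J hI hJ L R]; case: K => [b|I' J' hI' hJ' L' R'] h1 h2 h3;
rewrite /gle /=; (split; [|split]) => //;
try (move=> i; apply: h1; by exists i);
try (move=> j; apply: h2; by exists j);
exact: h3.
Qed.

Lemma rsub_atom (G G' : game A) : is_atom G -> rsub G' G -> False.
Proof. by case: G. Qed.
Lemma lsub_atom (G G' : game A) : is_atom G -> lsub G' G -> False.
Proof. by case: G. Qed.

Definition P (G H K : game A) : Prop :=
  (glf G H -> gle H K -> glf G K) /\
  (gle G H -> glf H K -> glf G K) /\
  (gle G H -> gle H K -> gle G K).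

Lemma step (G H K : game A)
  (IHG : forall G', lsub G' G \/ rsub G' G -> forall H K, P G' H K)
  (IHH : forall H', lsub H' H \/ rsub H' H -> forall K, P G H' K)
  (IHK : forall K', lsub K' K \/ rsub K' K -> P G H K') : P G H K.
Proof.
split; [|split].
- move=> Hf Hle.
  case: (glf_inv Hf) => [[G' [s h]]|[[H' [s h]]|[a [b [eG [eH ab]]]]]].
  + apply: (glf_R s); exact: (proj2 (proj2 (IHG G' (or_intror s) H K)) h Hle).
  + exact: (proj1 (proj2 (IHH H' (or_introl s) K)) h (gle_elimL Hle s)).
  + have hk : glf H K by apply: gle_atom_glf => //; left; rewrite eH.
    case: (glf_inv hk) => [[G' [s _]]|[[K' [s h]]|[a' [c [eH' [eK bc]]]]]].
    * by rewrite eH in s.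
    * apply: (glf_L s).
      apply: (proj2 (proj2 (IHK K' (or_introl s))) _ h).
      by rewrite eG eH; apply: gle_atom.
    * rewrite eH in eH'; case: eH' => <- in bc.
      rewrite eG eK; apply: glf_atom; exact: Order.POrderTheory.le_trans ab bc.
- move=> Hle Hf.
  case: (glf_inv Hf) => [[H' [s h]]|[[K' [s h]]|[b [c [eH [eK bc]]]]]].
  + exact: (proj1 (IHH H' (or_intror s) K) (gle_elimR Hle s) h).
  + apply: (glf_L s); exact: (proj2 (proj2 (IHK K' (or_introl s))) Hle h).
  + have hg : glf G H by apply: gle_atom_glf => //; right; rewrite eH.
    case: (glf_inv hg) => [[G' [s h]]|[[H' [s _]]|[a [b' [eG [eH' ab]]]]]].
    * apply: (glf_R s).
      apply: (proj2 (proj2 (IHG G' (or_intror s) H K)) h).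
      by rewrite eH eK; apply: gle_atom.
    * by rewrite eH in s.
    * rewrite eH in eH'; case: eH' => <- in ab.
      rewrite eG eK; apply: glf_atom; exact: Order.POrderTheory.le_trans ab bc.
- move=> Hle1 Hle2; apply: gle_intro.
  + move=> G' s; exact: (proj1 (IHG G' (or_introl s) H K) (gle_elimL Hle1 s) Hle2).
  + move=> K' s; exact: (proj1 (proj2 (IHK K' (or_intror s))) Hle1 (gle_elimR Hle2 s)).
  + case=> hat.
    * have hg : glf G H by apply: gle_atom_glf => //; left.
      case: (glf_inv hg) => [[G' [s _]]|[[H' [s h]]|[a [b [eG [eH ab]]]]]].
      -- by case: (rsub_atom hat s).
      -- exact: (proj1 (proj2 (IHH H' (or_introl s) K)) h (gle_elimL Hle2 s)).
      -- have hk : glf H K by apply: gle_atom_glf => //; left; rewrite eH.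
         case: (glf_inv hk) => [[G' [s _]]|[[K' [s h]]|[a' [c [eH' [eK bc]]]]]].
         ++ by rewrite eH in s.
         ++ apply: (glf_L s).
            apply: (proj2 (proj2 (IHK K' (or_introl s))) _ h).
            by rewrite eG eH; apply: gle_atom.
         ++ rewrite eH in eH'; case: eH' => <- in bc.
            rewrite eG eK; apply: glf_atom; exact: Order.POrderTheory.le_trans ab bc.
    * have hk : glf H K by apply: gle_atom_glf => //; right.
      case: (glf_inv hk) => [[H' [s h]]|[[K' [s _]]|[b [c [eH [eK bc]]]]]].
      -- exact: (proj1 (IHH H' (or_intror s) K) (gle_elimR Hle1 s) h).
      -- by case: (lsub_atom hat s).
      -- have hg : glf G H by apply: gle_atom_glf => //; right; rewrite eH.
         case: (glf_inv hg) => [[G' [s h]]|[[H' [s _]]|[a [b' [eG [eH' ab]]]]]].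
         ++ apply: (glf_R s).
            apply: (proj2 (proj2 (IHG G' (or_intror s) H K)) h).
            by rewrite eH eK; apply: gle_atom.
         ++ by rewrite eH in s.
         ++ rewrite eH in eH'; case: eH' => <- in ab.
            rewrite eG eK; apply: glf_atom; exact: Order.POrderTheory.le_trans ab bc.
Qed.

Lemma subI (Q : game A -> Prop) (I J : Type) hI hJ (L : I -> game A) (R : J -> game A) :
  (forall i, Q (L i)) -> (forall j, Q (R j)) ->
  forall X, lsub X (Comp hI hJ L R) \/ rsub X (Comp hI hJ L R) -> Q X.
Proof. by move=> hl hr X [[i ->]|[j ->]]. Qed.

Lemma allP (G H K : game A) : P G H K.
Proof.
elim: G H K => [a|I J hI hJ L IHL R IHR] H K.
all: elim: H K => [b|I' J' hI' hJ' L' IHL' R' IHR'] K.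
all: elim: K => [c|I'' J'' hI'' hJ'' L'' IHL'' R'' IHR''].
all: apply: step => //; try (by move=> ? []);
  try (apply: (subI (Q := fun X => forall H K, P X H K)) => //);
  try (apply: (subI (Q := fun X => forall K, P _ X K)) => //);
  try (apply: (subI (Q := fun X => P _ _ X)) => //).
Qed.

End Aux.

Theorem lemma4p6 (d : Order.disp_t) (A : porderType d) (G H K : game A) :
  (glf G H -> gle H K -> glf G K) /\
  (gle G H -> glf H K -> glf G K) /\
  (gle G H -> gle H K -> gle G K).
Proof. exact: allP. Qed.
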